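(* Fix a constant $f\in\mathbb{N}$ and let $\ell=f+1$. Consider directed graphs $G=(V,E)$ with $n=|V|\to\infty$, each with a partition $R_1,\dots,R_k$ of $V$, and let $R=\max_{k'\in[k]}|R_{k'}|$ and $r=\min_{k'\in[k]}|R_{k'}|$. Consider the partitioned omission reinforcement (described in the context) under the fault model $\mathrm{Om}(p)$, $p=p(n)$. (i) If $p\in o\big((n/r)^{-1/(f+1)}/R\big)$, the construction is a valid reinforcement for $\mathrm{Om}(p)$, i.e., with probability $1-o(1)$, $A'$ simulates $A$. (ii) If $G$ contains $\Omega(n)$ nodes with non-zero out-degree, $R\in O(1)$, and $p\in\omega(n^{-1/(f+1)})$, the reinforcement is not valid: there exist a scheduling algorithm $A$, inputs and omission behavior such that with probability $1-o(1)$, $A'$ does not simulate $A$.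
   Context: Model: a synchronous network is a directed graph $G=(V,E)$ with $n=|V|$. A scheduling algorithm $A$ assigns a state to each node; in each round each node may receive environment input, decides from its state which message (if any) to send on each outgoing link, and updates its state from messages received on incoming links. Write $[\ell]=\{1,\dots,\ell\}$. Fault model $\mathrm{Om}(p)$: the set $F'$ of faulty nodes of $G'$ is obtained by including each node independently with probability $p$; faulty nodes may only omit sending messages they should send. Partitioned omission reinforcement: $V'=V\times[\ell]$, $v_i=(v,i)$, $P(v_i)=v$. For $e=(v,w)\in E$, $E'_e=\{(v_i,w_i): i\in[\ell]\}$ if $v,w$ are in the same region, and $E'_e=\{(v_i,w_j): i,j\in[\ell]\}$ otherwise; $E'=\bigcup_e E'_e$. Each copy receives the environment input of its original. Algorithm $A'$: each $v'$ initializes local copies of the state of $P(v')$ and sets $\mathit{know}_{v'}=\mathbf{true}$; in each round, on each $(v',w')\in E'$, if $\mathit{know}_{v'}=\mathbf{true}$ it sends the message $P(v')$ would send on $(P(v'),P(w'))$ under $A$, or a symbol $\bot$ if there is none, and sends nothing if $\mathit{know}_{v'}=\mathbf{false}$; if $\mathit{know}_{v'}=\mathbf{true}$ and for every in-neighbor $w$ of $P(v')$ it received a message from some copy of $w$, it updates its state accordingly ($\bot$ meaning no message), and otherwise sets $\mathit{know}_{v'}=\mathbf{false}$. Simulation under $\mathrm{Om}(p)$: for each $v\in V$, some copy $v'$ with $P(v')=v$ computes in each round the state of $v$ under $A$. A reinforcement is valid if $A'$ simulates $A$ with probability $1-o(1)$ as $n\to\infty$. *)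

(* Defs.v *)
From HB Require Import structures.
From mathcomp Require Import all_boot all_order all_algebra.
From mathcomp Require Import all_classical all_reals all_analysis.
Set Implicit Arguments. Unset Strict Implicit. Unset Printing Implicit Defensive.
Import Order.TTheory GRing.Theory Num.Theory.
Local Open Scope ring_scope.

(* A synchronous deterministic scheduling algorithm on a graph with node set V,
   node states S, environment inputs I and messages M.
   In round t, node v with state s and input x sends [send v w s x] on link (v,w)
   ([None] = no message), and updates its state to [upd v s x rcv], where
   [rcv u] is the message received from u on link (u,v) ([None] = nothing). *)
Record algorithm (V : finType) (S I M : Type) := Algorithm {
  alg_init : V -> S;
  alg_send : V -> V -> S -> I -> option M;
  alg_upd  : V -> S -> I -> (V -> option M) -> S }.

Section Semantics.
Variables (V : finType) (E : rel V) (P : {set {set V}}).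
Variables (S I M : Type) (A : algorithm V S I M) (inp : nat -> V -> I).

Fixpoint run (t : nat) : V -> S :=
  match t with
  | 0 => alg_init A
  | t'.+1 => fun v =>
      alg_upd A v (run t' v) (inp t' v)
        (fun u => if E u v then alg_send A u v (run t' u) (inp t' u) else None)
  end.

Definition same_region (v w : V) : bool := finset.pblock P v == finset.pblock P w.

Variable l : nat.
(* V' = V x [l]; the copy (v,i) is v_i, and P(v_i) = v is the first component *)
Definition V' := (V * 'I_l)%type.

Definition E' : rel V' := fun x y =>
  E x.1 y.1 && (if same_region x.1 y.1 then x.2 == y.2 else true).

(* Execution of A' on G' under an omission behaviour [om]:
   [om t x y = true] means that x omits the message it should send on (x,y)
   in round t. States of A' are pairs (local copy of the state, know).
   Messages of A' are [option M]: [None] is the symbol bottom. *)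
Variable om : nat -> V' -> V' -> bool.

Definition delivered (t : nat) (st : V' -> S * bool) (x y : V')
  : option (option M) :=
  if E' x y && ~~ om t x y && (st x).2
  then Some (alg_send A x.1 y.1 (st x).1 (inp t x.1))
  else None.

Definition step' (t : nat) (st : V' -> S * bool) (y : V') : S * bool :=
  if (st y).2 &&
     [forall u : V, E u y.1 ==> [exists i : 'I_l, isSome (delivered t st (u, i) y)]]
  then
    (alg_upd A y.1 (st y).1 (inp t y.1)
       (fun u => if E u y.1 then
          match [pick i : 'I_l | isSome (delivered t st (u, i) y)] with
          | Some i => match delivered t st (u, i) y with
                      | Some (Some m) => Some m
                      | _ => None
                      end
          | None => None
          end
        else None), true)
  else ((st y).1, false).

Fixpoint run' (t : nat) : V' -> S * bool :=
  match t with
  | 0 => fun y => (alg_init A y.1, true)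
  | t'.+1 => step' t' (run' t')
  end.

Definition simulates : Prop :=
  forall v : V, exists i : 'I_l, forall t : nat,
      run' t (v, i) = (run t v, true).

End Semantics.

Definition admissible (W : finType) (F : {set W}) (om : nat -> W -> W -> bool) :=
  forall t x y, om t x y -> x \in F.

(* Probability, under Om(p), that the random fault set F' (each node of W
   included independently with probability p) satisfies [ev]. *)
Definition prob_Om (R : realType) (W : finType) (p : R) (ev : {set W} -> Prop) : R :=
  \sum_(F : {set W} | `[< ev F >]) p ^+ #|F| * (1 - p) ^+ (#|W| - #|F|).

Definition max_region (V : finType) (P : {set {set V}}) : nat := \max_(B in P) #|B|.
Definition min_region (V : finType) (P : {set {set V}}) : nat :=
  \big[minn/#|V|]_(B in P) #|B|.

(* Main.v *)
Require Import Defs.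
From HB Require Import structures.
From mathcomp Require Import all_boot all_order all_algebra.
From mathcomp Require Import all_classical all_reals all_analysis.
From mathcomp Require Import ring lra.
Import Order.TTheory GRing.Theory Num.Theory.
Import numFieldNormedType.Exports.

Module KM.
Set Implicit Arguments. Unset Strict Implicit.
Local Open Scope ring_scope.

Section Prob.
Variables (R : realType) (W : finType) (p : R).

Lemma weightE (F : {set W}) :
  p ^+ #|F| * (1 - p) ^+ (#|W| - #|F|) = \prod_x (if x \in F then p else 1 - p).
Proof.
symmetry; rewrite (bigID (mem F)) /=.
rewrite (eq_bigr (fun _ => p)); last by move=> x ->.
rewrite [X in _ * X](eq_bigr (fun _ => 1 - p)); last by move=> x /negbTE ->.
rewrite !prodr_const; symmetry; congr (_ * _ ^+ _).
by rewrite -(cardC (mem F)) addKn.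
Qed.

Lemma sum_sets (h : W -> bool -> R) :
  \sum_(F : {set W}) \prod_x h x (x \in F) = \prod_x (h x true + h x false).
Proof.
have -> : \prod_x (h x true + h x false) = \prod_x \sum_(b : bool) h x b.
  by apply: eq_bigr => x _; rewrite big_bool.
rewrite bigA_distr_bigA /=.
rewrite (reindex (fun F : {set W} => [ffun x => x \in F])) /=.
  by apply: eq_bigr => F _; apply: eq_bigr => x _; rewrite ffunE.
exists (fun f : {ffun W -> bool} => [set x | f x]%SET) => [F _|f _].
  by apply/setP => x; rewrite inE ffunE.
by apply/ffunP => x; rewrite ffunE inE.
Qed.

Lemma prob_sub (X : {set W}) :
  prob_Om p (fun F => X \subset F) = p ^+ #|X|.
Proof.
rewrite /prob_Om.
under eq_bigl => F do rewrite asboolb.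
rewrite big_mkcond /=.
transitivity (\sum_(F : {set W}) \prod_x
   ((if x \in X then (x \in F)%:R else 1) * (if x \in F then p else 1 - p))).
  apply: eq_bigr => F _; rewrite weightE big_split /=.
  case: ifPn => [/fintype.subsetP sXF|nsXF].
    rewrite [X in _ = X * _]big1 ?mul1r // => x _.
    by case: ifPn => // /sXF ->.
  have [x xX xF] : exists2 x, x \in X & x \notin F.
    exact/fintype.subsetPn.
  by rewrite (bigD1 x) //= xX (negbTE xF) !mul0r.
rewrite (sum_sets (fun x b => (if x \in X then b%:R else 1) * (if b then p else 1 - p))).
rewrite (bigID (mem X)) /= [X in _ * X]big1 ?mulr1; last first.
  by move=> x /negbTE ->; rewrite !mul1r addrC subrK.
rewrite -prodr_const; apply: eq_bigr => x ->.
by rewrite mul1r mul0r addr0.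
Qed.

Lemma prob_total : prob_Om p (fun _ : {set W} => True) = 1.
Proof.
have := prob_sub (@finset.set0 W); rewrite cards0 expr0 => <-.
rewrite /prob_Om; apply: eq_bigl => F; rewrite asboolb finset.sub0set; by rewrite asboolT.
Qed.


Hypothesis p01 : 0 <= p <= 1.

Definition wt (F : {set W}) := p ^+ #|F| * (1 - p) ^+ (#|W| - #|F|).
Definition Ex (g : {set W} -> R) := \sum_F wt F * g F.

Lemma wt_ge0 F : 0 <= wt F.
Proof. by case/andP: p01 => p0 p1; rewrite /wt mulr_ge0 // exprn_ge0 // subr_ge0. Qed.

Lemma prob_OmE ev : prob_Om p ev = Ex (fun F => (`[< ev F >] : bool)%:R).
Proof.
rewrite /prob_Om /Ex big_mkcond; apply: eq_bigr => F _.
by case: ifP => _; rewrite ?mulr1 ?mulr0.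
Qed.

Lemma Ex_le g h : (forall F, g F <= h F) -> Ex g <= Ex h.
Proof. by move=> gh; apply: ler_sum => F _; apply: ler_wpM2l; [exact: wt_ge0|]. Qed.

Lemma Ex_const c : Ex (fun _ => c) = c.
Proof.
have := prob_total; rewrite prob_OmE /Ex => H.
rewrite -[RHS]mul1r -[X in X * c]H big_distrl /=; apply: eq_bigr => F _.
by rewrite asboolT // mulr1.
Qed.

Lemma Ex_add g h : Ex (fun F => g F + h F) = Ex g + Ex h.
Proof. by rewrite /Ex -big_split /=; apply: eq_bigr => F _; rewrite mulrDr. Qed.

Lemma Ex_scale c g : Ex (fun F => c * g F) = c * Ex g.
Proof. by rewrite /Ex big_distrr /=; apply: eq_bigr => F _; rewrite mulrCA. Qed.

Lemma Ex_opp g : Ex (fun F => - g F) = - Ex g.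
Proof. by rewrite /Ex -sumrN; apply: eq_bigr => F _; rewrite mulrN. Qed.

Lemma Ex_sum (J : finType) (A : pred J) (g : J -> {set W} -> R) :
  Ex (fun F => \sum_(j in A) g j F) = \sum_(j in A) Ex (g j).
Proof.
rewrite /Ex (eq_bigr (fun F => \sum_(j in A) wt F * g j F)); last first.
  by move=> F _; rewrite big_distrr.
exact: exchange_big.
Qed.

Lemma Ex_sub (X : {set W}) : Ex (fun F => (X \subset F)%:R) = p ^+ #|X|.
Proof.
rewrite -(prob_sub X) prob_OmE; apply: eq_bigr => F _.
by rewrite asboolb.
Qed.

End Prob.


Section Mono.
Variables (R : realType) (W : finType) (p : R).
Hypothesis p01 : 0 <= p <= 1.

Lemma prob_mono (ev1 ev2 : {set W} -> Prop) :
  (forall F, ev1 F -> ev2 F) -> prob_Om p ev1 <= prob_Om p ev2.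
Proof.
move=> H; rewrite !prob_OmE //; apply: Ex_le => // F.
case: (asboolP (ev1 F)) => [/H h|_]; last by case: (asboolP (ev2 F)).
by case: (asboolP (ev2 F)).
Qed.


Lemma prob_le1 (ev : {set W} -> Prop) : prob_Om p ev <= 1.
Proof.
apply: (@le_trans _ _ (prob_Om p (fun _ : {set W} => True))); last by rewrite prob_total.
exact: prob_mono.
Qed.
End Mono.

End KM.
Import KM.

Module P1M.
Local Open Scope ring_scope.

Section P1.
Variables (R : realType) (V : finType) (P : {set {set V}}) (f : nat) (p : R).
Hypothesis p01 : 0 <= p <= 1.

Definition Gb (F : {set V' V f.+1}) : bool :=
  [forall B in P, [exists i : 'I_f.+1, [forall w in B, (w, i) \notin F]]].

Definition Xg (g : {ffun 'I_f.+1 -> V}) : {set V' V f.+1} :=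
  [set (g i, i) | i : 'I_f.+1]%SET.

Lemma card_Xg g : #|Xg g| = f.+1.
Proof.
rewrite /Xg card_imset ?card_ord //.
by move=> i j [_ ->].
Qed.

Lemma prob_good :
  1 - \sum_(B in P) (#|B|%:R * p) ^+ f.+1 <= prob_Om p (fun F => Gb F).
Proof.
rewrite prob_OmE //.
pose h (F : {set V' V f.+1}) := 1 - \sum_(B in P) \sum_(g in ffun_on B) ((Xg g \subset F)%:R : R).
have -> : 1 - \sum_(B in P) (#|B|%:R * p) ^+ f.+1 = Ex p h.
  rewrite /h Ex_add // Ex_const // Ex_opp // Ex_sum //; congr (_ - _).
  apply: eq_bigr => B _; rewrite Ex_sum //.
  rewrite (eq_bigr (fun _ => p ^+ f.+1)); last by move=> g _; rewrite Ex_sub // card_Xg.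
  by rewrite sumr_const card_ffun_on card_ord exprMn -natrX mulr_natl.
apply: Ex_le => // F; rewrite asboolb /h.
have s0 : 0 <= \sum_(B in P) \sum_(g in ffun_on B) ((Xg g \subset F)%:R : R).
  by apply: sumr_ge0 => B _; apply: sumr_ge0 => g _; exact: ler0n.
case: (boolP (Gb F)) => [_|nG]; first by rewrite lerBlDr lerDl.
rewrite subr_le0.
move: nG; rewrite /Gb => /forall_inPn [B BP /existsPn HB].
have Hi : forall i : 'I_f.+1, exists w, (w \in B) && ((w, i) \in F).
  move=> i; have /forall_inPn [w wB wF] := HB i.
  by exists w; rewrite wB negbK in wF *.
have [w0 _] := Hi ord0.
pose g := [ffun i => odflt w0 [pick w | (w \in B) && ((w, i) \in F)]].
have gP i : (g i \in B) && ((g i, i) \in F).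
  rewrite /g ffunE; case: pickP => [w //|H].
  by have [w Hw] := Hi i; have := H w; rewrite Hw.
rewrite (bigD1 B) //= (bigD1 g) /=; last first.
  by apply/ffun_onP => i; have /andP [] := gP i.
have -> : Xg g \subset F.
  by apply/fintype.subsetP => x /imsetP [i _ ->]; have /andP [] := gP i.
rewrite -addrA lerDl addr_ge0 //.
  by apply: sumr_ge0 => ? _; exact: ler0n.
by apply: sumr_ge0 => ? _; apply: sumr_ge0 => ? _; exact: ler0n.
Qed.
End P1.

End P1M.
Import P1M.

Module P2M.
Local Open Scope ring_scope.

Section P2.
Variables (R : realType) (V : finType) (D : {set V}) (f : nat) (p : R).
Hypothesis p01 : 0 <= p <= 1.

Definition Xv (v : V) : {set V' V f.+1} := [set (v, i) | i : 'I_f.+1]%SET.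

Lemma card_Xv v : #|Xv v| = f.+1.
Proof. by rewrite /Xv card_imset ?card_ord // => i j [->]. Qed.

Lemma card_XvU u v : u != v -> #|Xv u :|: Xv v| = (f.+1 + f.+1)%N.
Proof.
move=> nuv; have := cardsUI (Xv u) (Xv v); rewrite !card_Xv.
have -> : Xv u :&: Xv v = finset.set0.
  apply/setP => x; rewrite !inE; apply/negP => /andP [/imsetP [i _ ->] /imsetP [j _ [e _]]].
  by rewrite e eqxx in nuv.
by rewrite cards0 addn0.
Qed.

Definition Nb (F : {set V' V f.+1}) : bool := [exists v in D, Xv v \subset F].

Lemma prob_cover (mu : R) : mu = #|D|%:R * p ^+ f.+1 -> 0 < mu ->
  1 - mu^-1 <= prob_Om p (fun F => Nb F).
Proof.
move=> muE mu0.
rewrite prob_OmE //.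
pose N (F : {set V' V f.+1}) := \sum_(v in D) ((Xv v \subset F)%:R : R).
pose h (F : {set V' V f.+1}) := 1 - mu^-2 * (N F * N F - (2 * mu) * N F + mu ^+ 2).
have N0 F : 0 <= N F by apply: sumr_ge0 => ? _; exact: ler0n.
have EN : Ex p N = mu.
  rewrite Ex_sum // (eq_bigr (fun _ => p ^+ f.+1)); last first.
    by move=> v _; rewrite Ex_sub // card_Xv.
  by rewrite sumr_const muE mulr_natl.
have ENN : Ex p (fun F => N F * N F) <= mu + mu ^+ 2.
  have -> : (fun F => N F * N F) =
      (fun F => \sum_(u in D) \sum_(v in D) ((Xv u :|: Xv v \subset F)%:R : R)).
    apply: boolp.funext => F; rewrite /N big_distrl /=; apply: eq_bigr => u _.
    rewrite big_distrr /=; apply: eq_bigr => v _.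
    by rewrite finset.subUset; case: (Xv u \subset F); case: (Xv v \subset F); rewrite ?mulr1 ?mulr0 ?mul0r.
  rewrite Ex_sum //.
  have -> : mu + mu ^+ 2 =
      \sum_(u in D) \sum_(v in D) ((u == v)%:R * p ^+ f.+1 + p ^+ (f.+1 + f.+1)).
    rewrite muE; rewrite (eq_bigr (fun _ => p ^+ f.+1 + #|D|%:R * p ^+ (f.+1 + f.+1))); last first.
      move=> u uD; rewrite big_split /= sumr_const mulr_natl; congr (_ + _).
      rewrite (bigD1 u) //= eqxx mul1r big1 ?addr0 // => v /andP [_ /negbTE].
      by rewrite eq_sym => ->; rewrite mul0r.
    rewrite big_split /= !sumr_const exprD.
    set a := p ^+ f.+1; set n := #|D|.
    rewrite -[a *+ n]mulr_natl -[(_ * (a * a)) *+ n]mulr_natl; ring.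
  apply: ler_sum => u uD; rewrite Ex_sum //; apply: ler_sum => v vD.
  rewrite Ex_sub //; case: (eqVneq u v) => [->|nuv].
    by rewrite finset.setUid card_Xv mul1r lerDl exprn_ge0 //; case/andP: p01.
  by rewrite card_XvU // mul0r add0r.
apply: (@le_trans _ _ (Ex p h)).
  rewrite /h Ex_add // Ex_const // Ex_opp // Ex_scale //.
  rewrite !Ex_add // Ex_opp // Ex_scale // EN Ex_const //.
  apply: lerB => //.
  have -> : mu^-1 = mu^-2 * (mu + mu ^+ 2 - 2 * mu * mu + mu ^+ 2).
    by field; rewrite gt_eqF.
  apply: ler_wpM2l; first by rewrite invr_ge0 exprn_ge0 // ltW.
  by rewrite lerD2r lerD2r.
apply: Ex_le => // F; rewrite asboolb /h.
case: (boolP (Nb F)) => [_|nN].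
  rewrite lerBlDr lerDl mulr_ge0 ?invr_ge0 ?exprn_ge0 ?(ltW mu0) //.
  have -> : N F * N F - 2 * mu * N F + mu ^+ 2 = (N F - mu) ^+ 2 by ring.
  exact: sqr_ge0.
have -> : N F = 0.
  rewrite /N big1 // => v vD; move: nN; rewrite /Nb => /exists_inPn /(_ v vD).
  by move/negbTE => ->.
rewrite mul0r mulr0 !subr0 add0r mulVf ?subrr //.
by rewrite expf_neq0 // gt_eqF.
Qed.
End P2.

End P2M.
Import P2M.

Module DM.

Section Det.
Variables (V : finType) (E : rel V) (P : {set {set V}}).
Hypothesis HP : finset.partition P [set: V]%SET.
Variables (S I M : Type) (A : algorithm V S I M) (inp : nat -> V -> I) (f : nat).
Variable F : {set V' V f.+1}.

Lemma cover_all x : x \in finset.cover P.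
Proof. by case/and3P: HP => /eqP -> _ _; rewrite inE. Qed.

Hypothesis HG : forall B, B \in P -> exists i : 'I_f.+1, forall w, w \in B -> (w, i) \notin F.

Definition gB (B : {set V}) : 'I_f.+1 :=
  odflt ord0 [pick i | [forall w in B, (w, i) \notin F]].

Lemma gBP B : B \in P -> forall w, w \in B -> (w, gB B) \notin F.
Proof.
move=> BP; rewrite /gB; case: pickP => [i /forall_inP H //|H].
have [i Hi] := HG B BP; have := H i; move/negbT/negP; case.
by apply/forall_inP.
Qed.

Definition gi (v : V) := gB (finset.pblock P v).

Lemma giP v w : finset.pblock P w = finset.pblock P v -> (w, gi v) \notin F.
Proof.
move=> e; apply: gBP; first exact/pblock_mem/cover_all.
by rewrite -e mem_pblock cover_all.
Qed.

Lemma good_sim om : admissible F om -> simulates E P A inp om.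
Proof.
move=> adm.
have key : forall t, (forall y, (run' E P A inp om t y).2 ->
                         (run' E P A inp om t y).1 = run E A inp t y.1)
                  /\ (forall v, (run' E P A inp om t (v, gi v)).2).
  elim=> [|t [IH1 IH2]]; first by split.
  have deliv : forall u v, E u v ->
      exists j, isSome (delivered E P A inp om t (run' E P A inp om t) (u, j) (v, gi v)).
    move=> u v Euv.
    case sr: (same_region P u v).
      exists (gi v); rewrite /delivered /E' /= Euv sr eqxx /=.
      have -> : om t (u, gi v) (v, gi v) = false.
        apply/negP => /adm; apply/negP; apply: giP; exact/eqP.
      by have := IH2 u; rewrite /gi (eqP sr) => ->.
    exists (gi u); rewrite /delivered /E' /= Euv sr /=.
    have -> : om t (u, gi u) (v, gi v) = false.
      by apply/negP => /adm; apply/negP; apply: giP.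
    by rewrite IH2.
  split.
  - move=> y /=; rewrite /step'.
    case: ifP => [/andP [ky /forallP Hall] _ /=|//].
    rewrite IH1 //; congr (alg_upd _ _ _ _ _).
    apply: boolp.funext => u.
    case Eu: (E u y.1) => //.
    case: pickP => [i /= Hi|H]; last first.
      by have := Hall u; rewrite Eu /= => /existsP [i Hi]; have := H i; rewrite Hi.
    move: Hi; rewrite /delivered.
    case: ifP => // /andP [/andP [_ _] ku] _.
    by rewrite /= IH1 //; case: (alg_send _ _ _ _ _).
  - move=> v /=; rewrite /step' IH2 /=.
    case: ifP => //= /negP; case; apply/forallP => u; apply/implyP => Euv.
    by apply/existsP; apply: deliv.
move=> v; exists (gi v) => t; have [H1 H2] := key t.
by rewrite [LHS]surjective_pairing H1 // H2.
Qed.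
End Det.

Lemma bad_nosim (V : finType) (E : rel V) (P : {set {set V}}) (S I M : Type)
  (A : algorithm V S I M) (inp : nat -> V -> I) (f : nat) (F : {set V' V f.+1}) u w :
  E u w -> (forall i, (u, i) \in F) ->
  ~ simulates E P A inp (fun _ x _ => x \in F).
Proof.
move=> Euw Hu sim; have [i Hi] := sim w; have := Hi 1%N.
rewrite /= /step' /=.
have -> : [forall u', E u' w ==> [exists j, isSome (delivered E P A inp
    (fun _ x _ => x \in F) 0 (run' E P A inp (fun _ x _ => x \in F) 0) (u', j) (w, i))]] = false.
  apply/negbTE/forallPn; exists u; rewrite Euw /=; apply/existsPn => j.
  by rewrite /delivered Hu /= andbF.
by case.
Qed.

End DM.
Import DM.

Module NM.
Set Implicit Arguments. Unset Strict Implicit.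
Local Open Scope ring_scope.

Lemma powR_l (R : realType) (x : R) (l : nat) : (0 < l)%N -> 0 < x ->
  (x `^ (- (l%:R)^-1)) ^+ l = x^-1.
Proof.
move=> l0 x0; rewrite -powR_mulrn ?powR_ge0 // -powRrM mulNr mulVf ?pnatr_eq0 -?lt0n //.
by rewrite powR_inv1 // ltW.
Qed.

Section Part.
Variables (V : finType) (P : {set {set V}}).
Hypothesis HP : finset.partition P [set: V]%SET.

Lemma min_le B : B \in P -> (min_region P <= #|B|)%N.
Proof.
move=> BP; rewrite /min_region.
have : B \in index_enum (Finite.clone _ {set V}) by rewrite mem_index_enum.
elim: (index_enum _) => // a r IH; rewrite inE big_cons.
case/predU1P => [<-|Br]; first by rewrite BP geq_minl.
case: ifP => _; last exact: IH.
by rewrite geq_min IH ?orbT.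
Qed.

Lemma max_ge B : B \in P -> (#|B| <= max_region P)%N.
Proof. by move=> BP; rewrite /max_region (bigD1 B) //= leq_maxl. Qed.

Lemma min_gt0 : (0 < #|V|)%N -> (0 < min_region P)%N.
Proof.
move=> n0; rewrite /min_region; apply: (big_ind (fun x => 0 < x)%N) => //.
  by move=> x y x0 y0; rewrite leq_min x0 y0.
move=> B BP; rewrite card_gt0; apply/negP => /eqP B0.
by case/and3P: HP => _ _; rewrite -B0 BP.
Qed.

Lemma cardP_min : (#|P| * min_region P <= #|V|)%N.
Proof.
have := card_partition HP; rewrite cardsT => ->.
rewrite -sum1_card big_distrl /=; apply: leq_sum => B BP.
by rewrite mul1n min_le.
Qed.

Lemma bound1 (R : realType) (p : R) (f : nat) : 0 <= p -> (0 < #|V|)%N ->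
  \sum_(B in P) (#|B|%:R * p) ^+ f.+1 <=
  (p / ((#|V|%:R / (min_region P)%:R) `^ (- (f.+1%:R)^-1) / (max_region P)%:R)) ^+ f.+1.
Proof.
move=> p0 n0.
have r0 := min_gt0 n0.
set n := #|V|; set r := min_region P; set Rm := max_region P.
have x0 : 0 < n%:R / r%:R :> R by rewrite divr_gt0 // ltr0n.
rewrite invf_div mulrA exprMn exprVn powR_l // invrK.
apply: (@le_trans _ _ (\sum_(B in P) (Rm%:R * p) ^+ f.+1)).
  apply: ler_sum => B BP; apply: lerXn2r; rewrite ?nnegrE ?mulr_ge0 //.
  by apply: ler_wpM2r => //; rewrite ler_nat max_ge.
rewrite sumr_const -[_ *+ #|P|]mulr_natr [p * _]mulrC; apply: ler_wpM2l.
  by rewrite exprn_ge0 // mulr_ge0.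
rewrite ler_pdivlMr ?ltr0n // -natrM ler_nat.
exact: cardP_min.
Qed.
End Part.

End NM.
Import NM.

Local Open Scope classical_set_scope.
Local Open Scope ring_scope.

Theorem theorem3 (f : nat) (R : realType)
  (V : nat -> finType) (E : forall m, rel (V m)) (P : forall m, {set {set V m}})
  (HP : forall m, finset.partition (P m) [set: V m])
  (p : nat -> R) (Hp : forall m, 0 <= p m <= 1)
  (Hn : forall N : nat, exists m0 : nat, forall m, (m0 <= m)%N -> (N <= #|V m|)%N) :
  (* (i) *)
  ((fun m => p m /
      (((#|V m|%:R / (min_region (P m))%:R) `^ (- (f.+1%:R)^-1))
        / (max_region (P m))%:R)) @ \oo --> (0 : R) ->
   forall (S I M : nat -> Type)
          (A : forall m, algorithm (V m) (S m) (I m) (M m))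
          (inp : forall m, nat -> V m -> I m),
   (fun m => prob_Om (p m)
      (fun F : {set V' (V m) f.+1} =>
         forall om, admissible F om ->
           simulates (E m) (P m) (A m) (inp m) om)) @ \oo --> (1 : R))
  /\
  (* (ii) *)
  ((exists c : R, 0 < c /\ exists m0 : nat, forall m, (m0 <= m)%N ->
       c * #|V m|%:R <= #|finset.finset (fun v : V m => [exists w, E m v w])|%:R) ->
   (exists C : nat, exists m0 : nat, forall m, (m0 <= m)%N ->
       (max_region (P m) <= C)%N) ->
   (fun m => p m / (#|V m|%:R `^ (- (f.+1%:R)^-1))) @ \oo --> +oo ->
   exists (S I M : nat -> Type)
          (A : forall m, algorithm (V m) (S m) (I m) (M m))
          (inp : forall m, nat -> V m -> I m)
          (beh : forall m, {set V' (V m) f.+1} -> nat -> V' (V m) f.+1 -> V' (V m) f.+1 -> bool),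
     (forall m F, admissible F (beh m F)) /\
     (fun m => prob_Om (p m)
        (fun F : {set V' (V m) f.+1} =>
           ~ simulates (E m) (P m) (A m) (inp m) (beh m F))) @ \oo --> (1 : R)).
Proof.
have inf_ev (Q : nat -> Prop) : (\forall m \near \oo, Q m) -> exists N, forall m, (N <= m)%N -> Q m.
  by move=> [N _ HN]; exists N => m hm; exact: HN.
have ev_inf (Q : nat -> Prop) : (exists N, forall m, (N <= m)%N -> Q m) -> (\forall m \near \oo, Q m).
  by move=> [N HN]; exists N.
have [N0 HN0] := Hn 1%N.
split.
- move=> Hr S I M A inp.
  apply/cvgrPdist_le => e e0.
  move: (Hr) => /cvgrPdist_le /(_ e e0) /inf_ev [N1 HN1].
  move: (Hr) => /cvgrPdist_le /(_ 1 ltr01) /inf_ev [N2 HN2].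
  apply: ev_inf; exists (maxn N0 (maxn N1 N2)) => m; rewrite !geq_max => /and3P [m0 m1 m2].
  have n1 := HN0 m m0; have hme := HN1 m m1; have hm1 := HN2 m m2.
  set rt := p m / _ in hme hm1.
  have rt0 : 0 <= rt.
    apply: divr_ge0; first by case/andP: (Hp m).
    by apply: divr_ge0; rewrite ?powR_ge0.
  rewrite sub0r normrN ger0_norm // in hme hm1.
  have q1 := prob_le1 (Hp m) (fun F : {set V' (V m) f.+1} =>
         forall om, admissible F om -> simulates (E m) (P m) (A m) (inp m) om).
  rewrite ger0_norm ?subr_ge0 // lerBlDr -lerBlDl.
  apply: (le_trans _ (@prob_mono _ _ _ (Hp m) (fun F : {set V' (V m) f.+1} => is_true (Gb (V m) (P m) f F)) _ _)); last first.
    move=> F GF om adm; apply: good_sim adm => //.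
    move=> B BP; have := GF; rewrite /Gb; move/fintype.forall_inP => H.
    have /existsP [i /fintype.forall_inP Hi] := H B BP.
    by exists i.
  apply: (le_trans _ (@prob_good R (V m) (P m) f (p m) (Hp m))).
  apply: lerB => //.
  apply: le_trans (bound1 (HP m) f _ n1) _; first by case/andP: (Hp m).
  apply: (le_trans _ hme).
  exact: ler_iXnr.
- move=> [c [c0 [Nc HNc]]] _ Hr.
  exists (fun _ => unit), (fun _ => unit), (fun _ => unit).
  exists (fun m => Algorithm (fun _ : V m => tt) (fun _ _ _ _ => None) (fun _ _ _ _ => tt)).
  exists (fun m _ _ => tt).
  exists (fun m (F : {set V' (V m) f.+1}) (_ : nat) (x _ : V' (V m) f.+1) => x \in F).
  split; first by move=> m F t x y.
  apply/cvgrPdist_le => e e0.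
  move: Hr => /cvgryPge /(_ (Num.max 1 (c * e)^-1)) /inf_ev [N1 HN1].
  apply: ev_inf; exists (maxn N0 (maxn N1 Nc)) => m; rewrite !geq_max => /and3P [m0 m1 m2].
  have n1 := HN0 m m0; have hr := HN1 m m1; have hc := HNc m m2.
  set rt := p m / _ in hr.
  set D := finset.finset _ in hc.
  rewrite ge_max in hr; case/andP: hr => rt1 rtc.
  have pm0 : 0 <= p m by case/andP: (Hp m).
  have q1 := prob_le1 (Hp m) (fun F : {set V' (V m) f.+1} =>
     ~ simulates (E m) (P m)
       (Algorithm (fun _ : V m => tt) (fun _ _ _ _ => None) (fun _ _ _ _ => tt))
       (fun _ _ => tt) (fun _ x _ => x \in F)).
  rewrite ger0_norm ?subr_ge0 // lerBlDr -lerBlDl.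
  set mu := #|D|%:R * p m ^+ f.+1.
  have rtl : rt ^+ f.+1 = p m ^+ f.+1 * #|V m|%:R.
    by rewrite /rt exprMn exprVn powR_l ?invrK // ltr0n.
  have mu_ge : c * rt <= mu.
    apply: (@le_trans _ _ (c * rt ^+ f.+1)).
      by apply: ler_wpM2l; [exact: ltW | exact: ler_eXnr].
    rewrite rtl /mu mulrCA [X in _ <= X]mulrC.
    by apply: ler_wpM2l; [exact: exprn_ge0 | exact: hc].
  have mu_e : e^-1 <= mu.
    apply: le_trans mu_ge.
    have : c * (c * e)^-1 <= c * rt by apply: ler_wpM2l => //; exact: ltW.
    by rewrite invfM mulrA divff ?gt_eqF // mul1r.
  have mu0 : 0 < mu by apply: lt_le_trans mu_e; rewrite invr_gt0.
  apply: (le_trans _ (@prob_mono _ _ _ (Hp m)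
     (fun F : {set V' (V m) f.+1} => is_true (Nb (V m) D f F)) _ _)); last first.
    move=> F; rewrite /Nb => /exists_inP [v vD sub].
    move: vD; rewrite inE => /existsP [w Evw].
    apply: bad_nosim Evw _ => i.
    by apply: (fintype.subsetP sub); apply/imsetP; exists i.
  apply: (le_trans _ (@prob_cover R (V m) D f (p m) (Hp m) mu erefl mu0)).
  apply: lerB => //.
  by rewrite -[e]invrK lef_pV2 ?posrE ?invr_gt0.
Qed.
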